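(* Consider the following TDCD process. Let $N\ge 1$ silos each contain $K\ge 1$ clients, let $D=D_1+\dots+D_N$, and write every $\theta\in\mathbb{R}^D$ in blocks $\theta=[\theta_{(1)}^T,\dots,\theta_{(N)}^T]^T$ with $\theta_{(j)}\in\mathbb{R}^{D_j}$. Fix an integer $Q\ge1$ and $\eta>0$. Client $k$ of silo $j$ holds $\theta^t_{k,j}\in\mathbb{R}^{D_j}$. Define $\tilde\theta^t\in\mathbb{R}^D$ by $\tilde\theta^t_{(j)}=\frac1K\sum_k\theta^t_{k,j}$. At every multiple $t$ of $Q$, each $\theta^t_{k,j}$ is reset to $\tilde\theta^t_{(j)}$. For the current iteration $t$, let $t_0$ be the most recent such synchronization iteration before $t$ (with $t-t_0\le Q$). Define $y^t_{k,j}\in\mathbb{R}^D$ by $(y^t_{k,j})_{(j)}=\theta^t_{k,j}$ and $(y^t_{k,j})_{(l)}=\tilde\theta^{t_0}_{(l)}$ for $l\ne j$. The update is $\theta^{t+1}_{k,j}=\theta^t_{k,j}-\eta\, g_{k,j}(y^t_{k,j})$, where $g_{k,j}(\cdot)\in\mathbb{R}^{D_j}$ is the stochastic partial gradient computed by client $k$ of silo $j$ on the current minibatch. Then for any constant $L_{\max}>0$, $$\frac{L_{\max}^2}{K}\sum_{j=1}^N\sum_{k=1}^K\|\tilde\theta^t-y^t_{k,j}\|^2\le\frac{\eta^2L_{\max}^2QN}{K}\sum_{j=1}^N\sum_{\tau=t_0}^{t-1}\sum_{p=1}^K\|g_{p,j}(y^\tau_{p,j})\|^2.$$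
   Context: In the paper, $L_{\max}=\max_j L_j$, where $L_j$ is the Lipschitz constant of the block partial gradient $\nabla_{(j)}\mathcal{L}$ of the loss. The inequality does not depend on that interpretation, since both sides carry the factor $L_{\max}^2$. *)

(* Defs.v *)
From mathcomp Require Import all_boot all_order all_algebra.
Set Implicit Arguments. Unset Strict Implicit. Unset Printing Implicit Defensive.
Import Order.TTheory GRing.Theory Num.Theory.
Local Open Scope ring_scope.

Section TDCD.
Variables (R : realFieldType) (N K Q : nat) (D : 'I_N -> nat).

Definition sqn n (v : 'rV[R]_n) : R := \sum_(i < n) (v 0 i) ^+ 2.

(* A vector of R^D, D = D_1 + ... + D_N, given by its blocks theta_(j) in R^{D_j}. *)
Definition bvec := forall j : 'I_N, 'rV[R]_(D j).

Definition bsqdist (x y : bvec) : R := \sum_(l < N) sqn (x l - y l).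

(* theta t k j : local parameter of client k of silo j at iteration t
   (value produced by the update, before the possible synchronization reset). *)
Variable theta : nat -> 'I_K -> forall j : 'I_N, 'rV[R]_(D j).

Definition theta_avg (t : nat) : bvec :=
  fun j => (K%:R)^-1 *: \sum_(k < K) theta t k j.

Definition last_sync (t : nat) : nat := (Q * (t %/ Q))%N.

(* Value actually held after the reset at multiples of Q. *)
Definition theta_cur (t : nat) (k : 'I_K) (j : 'I_N) : 'rV[R]_(D j) :=
  if (Q %| t)%N then theta_avg t j else theta t k j.

Definition yvec (t : nat) (k : 'I_K) (j : 'I_N) : bvec :=
  @dfwith _ (fun l => 'rV[R]_(D l)) (theta_avg (last_sync t)) j (theta_cur t k j).

End TDCD.

(* Main.v *)
Require Import Defs.
From mathcomp Require Import all_boot all_order all_algebra.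
From mathcomp Require Import ring lra.
Import Order.TTheory GRing.Theory Num.Theory.
Local Open Scope ring_scope.

Lemma sqn_ge0 (R : realFieldType) n (v : 'rV[R]_n) : 0 <= sqn v.
Proof. by apply: sumr_ge0 => i _; rewrite sqr_ge0. Qed.

Lemma sqnN (R : realFieldType) n (v : 'rV[R]_n) : sqn (- v) = sqn v.
Proof. by apply: eq_bigr => i _; rewrite mxE sqrrN. Qed.

Lemma sqnZ (R : realFieldType) n (a : R) (v : 'rV[R]_n) : sqn (a *: v) = a ^+ 2 * sqn v.
Proof. rewrite /sqn mulr_sumr; apply: eq_bigr => i _; rewrite mxE exprMn //. Qed.

Lemma sum_sq_le (R : realFieldType) (I : Type) (r : seq I) (x : I -> R) :
  (\sum_(i <- r) x i) ^+ 2 <= (size r)%:R * \sum_(i <- r) x i ^+ 2.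
Proof.
case: (posnP (size r)) => [/size0nil -> | hn].
  by rewrite !big_nil expr0n /= mul0r.
set S := \sum_(i <- r) x i; set Q2 := \sum_(i <- r) x i ^+ 2.
have H c : \sum_(i <- r) (x i - c) ^+ 2 = Q2 - 2 * c * S + (size r)%:R * c ^+ 2.
  rewrite /Q2 /S; clear S Q2 hn; elim: r => [|a r IH]; rewrite ?big_nil ?big_cons /=.
    by rewrite mul0r; ring.
  by rewrite IH mulrS; ring.
have hn' : 0 < (size r)%:R :> R by rewrite ltr0n.
have := H (S / (size r)%:R).
have : 0 <= \sum_(i <- r) (x i - S / (size r)%:R) ^+ 2 by apply: sumr_ge0 => i _; rewrite sqr_ge0.
move=> h0 e; rewrite e in h0.
set n := (size r)%:R in hn' h0 *.
have e2 : Q2 - 2 * (S / n) * S + n * (S / n) ^+ 2 = Q2 - S ^+ 2 / n by field; rewrite gt_eqF.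
rewrite e2 subr_ge0 ler_pdivrMr // in h0.
by rewrite mulrC.
Qed.

Lemma sum_sq_shift (R : realFieldType) (I : Type) (r : seq I) (x : I -> R) c :
  \sum_(i <- r) (x i - c) ^+ 2 =
  \sum_(i <- r) x i ^+ 2 - 2 * c * \sum_(i <- r) x i + (size r)%:R * c ^+ 2.
Proof.
elim: r => [|a r IH]; rewrite ?big_nil ?big_cons /=.
  by rewrite mul0r; ring.
by rewrite IH mulrS; ring.
Qed.

Lemma size_ie K : size (index_enum 'I_K) = K.
Proof. by rewrite -[RHS]card_ord cardE enumT. Qed.

Lemma var_id (R : realFieldType) K (x : 'I_K -> R) a : (0 < K)%N ->
  \sum_(k < K) ((K%:R)^-1 * \sum_(k < K) x k - x k) ^+ 2 =
  \sum_(k < K) (x k - a) ^+ 2 - K%:R * ((K%:R)^-1 * \sum_(k < K) x k - a) ^+ 2.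
Proof.
move=> hK.
set m := _ * _.
have -> : \sum_(k < K) (m - x k) ^+ 2 = \sum_(k < K) (x k - m) ^+ 2.
  by apply: eq_bigr => k _; rewrite -sqrrN opprB.
rewrite !sum_sq_shift size_ie /m.
have hK' : K%:R != 0 :> R by rewrite pnatr_eq0 -lt0n.
by field.
Qed.

Lemma sqn_sum_le (R : realFieldType) n (I : Type) (r : seq I) (v : I -> 'rV[R]_n) :
  sqn (\sum_(i <- r) v i) <= (size r)%:R * \sum_(i <- r) sqn (v i).
Proof.
rewrite /sqn (exchange_big) /= mulr_sumr; apply: ler_sum => c _.
rewrite summxE; exact: sum_sq_le.
Qed.

Definition vmean (R : realFieldType) K n (v : 'I_K -> 'rV[R]_n) :=
  (K%:R)^-1 *: \sum_(k < K) v k.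

Lemma var_id_v (R : realFieldType) K n (v : 'I_K -> 'rV[R]_n) a : (0 < K)%N ->
  \sum_(k < K) sqn ((K%:R)^-1 *: \sum_(k < K) v k - v k) =
  \sum_(k < K) sqn (v k - a) - K%:R * sqn ((K%:R)^-1 *: \sum_(k < K) v k - a).
Proof.
move=> hK; rewrite /sqn exchange_big /= [X in _ = X - _]exchange_big /= mulr_sumr -sumrB.
apply: eq_bigr => c _.
rewrite !mxE summxE.
under eq_bigr do rewrite !mxE summxE.
under [in RHS]eq_bigr do rewrite !mxE.
exact: var_id.
Qed.

Lemma jensen_v (R : realFieldType) K n (v : 'I_K -> 'rV[R]_n) a : (0 < K)%N ->
  K%:R * sqn ((K%:R)^-1 *: \sum_(k < K) v k - a) <= \sum_(k < K) sqn (v k - a).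
Proof.
move=> hK; rewrite -subr_ge0 -(@var_id_v _ _ _ v a hK).
by apply: sumr_ge0 => k _; exact: sqn_ge0.
Qed.

Lemma bsqdist_dfwith (R : realFieldType) N (D : 'I_N -> nat) (x z : bvec R D) j
  (w : 'rV[R]_(D j)) :
  bsqdist x (@dfwith _ (fun l => 'rV[R]_(D l)) z j w) =
  bsqdist x z - sqn (x j - z j) + sqn (x j - w).
Proof.
rewrite /bsqdist (bigD1 j) //= [in RHS](bigD1 j) //= dfwith_in.
have -> : \sum_(i < N | i != j) sqn (x i - @dfwith _ (fun l => 'rV[R]_(D l)) z j w i)
   = \sum_(i < N | i != j) sqn (x i - z i).
  by apply: eq_bigr => i hi; rewrite dfwith_out // eq_sym.
ring.
Qed.

Lemma bsqdist_xx (R : realFieldType) N (D : 'I_N -> nat) (x : bvec R D) : bsqdist x x = 0.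
Proof. by apply: big1 => l _; rewrite subrr; apply: big1 => i _; rewrite mxE expr0n. Qed.

Theorem lemma6 (R : realFieldType) (N K Q : nat) (D : 'I_N -> nat)
  (hN : (0 < N)%N) (hK : (0 < K)%N) (hQ : (0 < Q)%N)
  (eta : R) (heta : 0 < eta)
  (theta : nat -> 'I_K -> forall j : 'I_N, 'rV[R]_(D j))
  (g : nat -> 'I_K -> forall j : 'I_N, bvec R D -> 'rV[R]_(D j))
  (hupd : forall (t : nat) (k : 'I_K) (j : 'I_N),
      theta t.+1 k j = theta_cur Q theta t k j
                       - eta *: g t k j (yvec Q theta t k j))
  (t : nat) (Lmax : R) (hL : 0 < Lmax) :
  Lmax ^+ 2 / K%:R *
    \sum_(j < N) \sum_(k < K)
      bsqdist (theta_avg theta t) (yvec Q theta t k j)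
  <= eta ^+ 2 * Lmax ^+ 2 * Q%:R * N%:R / K%:R *
    \sum_(j < N) \sum_(last_sync Q t <= tau < t) \sum_(p < K)
      sqn (g tau p j (yvec Q theta tau p j)).
Proof.
case: (boolP (Q %| t)%N) => hdiv.
  have ht0 : last_sync Q t = t by rewrite /last_sync mulnC divnK.
  rewrite [X in _ <= _ * X]big1 ?mulr0; last by move=> j _; rewrite ht0 big_geq.
  rewrite big1 ?mulr0 // => j _; apply: big1 => k _.
  rewrite /yvec bsqdist_dfwith /theta_cur hdiv ht0 bsqdist_xx.
  by rewrite subrr sub0r addNr.
set t0 := last_sync Q t.
have ht0 : t0 = (t %/ Q * Q)%N by rewrite /t0 /last_sync mulnC.
have hm : (t - t0 = t %% Q)%N by rewrite ht0 {1}(divn_eq t Q) addnC addnK.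
have hmpos : (0 < t - t0)%N by rewrite hm lt0n -/(dvdn Q t) hdiv.
have hmQ : (t - t0 < Q)%N by rewrite hm ltn_mod.
have hndiv : forall r, (0 < r < Q)%N -> ~~ (Q %| t0 + r)%N.
  move=> r /andP [r0 rQ]; rewrite /dvdn ht0 modnMDl modn_small //.
  by rewrite -lt0n.
have hdiv0 : (Q %| t0)%N by rewrite ht0 dvdn_mull.
have hrec : forall r, (r < t - t0)%N -> forall k j,
    theta (t0 + r.+1)%N k j = theta_avg theta t0 j -
      eta *: \sum_(t0 <= tau < t0 + r.+1) g tau k j (yvec Q theta tau k j).
  elim=> [|r IH] hr k j.
    by rewrite addn1 hupd /theta_cur hdiv0 big_nat1.
  rewrite addnS hupd /theta_cur (negPf (hndiv r.+1 _)); last first.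
    by rewrite ltn0Sn /=; apply: leq_ltn_trans hmQ; apply: ltnW.
  rewrite IH; last by apply: ltnW.
  rewrite big_nat_recr /=; last by rewrite leq_addr.
  by rewrite scalerDr opprD addrA.
have htheta : forall k j, theta t k j = theta_avg theta t0 j -
      eta *: \sum_(t0 <= tau < t) g tau k j (yvec Q theta tau k j).
  move=> k j; have := hrec (t - t0).-1 ltac:(by rewrite ltn_predL) k j.
  by rewrite prednK // subnKC // ht0 leq_divM.
set F := \sum_(j < N) \sum_(t0 <= tau < t) \sum_(p < K) sqn (g tau p j (yvec Q theta tau p j)).
set A := theta_avg theta t.
set Z := theta_avg theta t0.
set B := bsqdist A Z.
set E := \sum_(j < N) \sum_(k < K) sqn (theta t k j - Z j).
have step1 : \sum_(j < N) \sum_(k < K) bsqdist A (yvec Q theta t k j)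
    = (N%:R - 2) * (K%:R * B) + E.
  transitivity (\sum_(j < N) (K%:R * B - 2 * (K%:R * sqn (A j - Z j))
                 + \sum_(k < K) sqn (theta t k j - Z j))).
    apply: eq_bigr => j _.
    under eq_bigr => k _ do rewrite /yvec /theta_cur (negPf hdiv) bsqdist_dfwith.
    rewrite big_split /= sumr_const card_ord.
    have := @var_id_v _ _ _ (fun k => theta t k j) (Z j) hK.
    rewrite /= -/(theta_avg theta t j) -/A => ->.
    rewrite -/t0 -/Z -/B -[(B - _) *+ K]mulr_natr; ring.
  rewrite !big_split /= sumrN sumr_const card_ord -!mulr_sumr.
  rewrite -[_ *+ N]mulr_natr /E /B /bsqdist; ring.
have step2 : K%:R * B <= E.
  rewrite /E /B /bsqdist mulr_sumr; apply: ler_sum => j _.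
  exact: jensen_v.
have step3 : E <= eta ^+ 2 * Q%:R * F.
  rewrite /E /F !mulr_sumr; apply: ler_sum => j _.
  rewrite [X in _ <= _ * X]exchange_big /= mulr_sumr; apply: ler_sum => k _.
  rewrite htheta addrAC subrr add0r sqnN sqnZ -[eta ^+ 2 * Q%:R * _]mulrA; apply: ler_wpM2l.
    exact: sqr_ge0.
  apply: le_trans (sqn_sum_le _ _ _ _ _) _.
  rewrite size_iota ler_wpM2r //.
    by apply: sumr_ge0 => tau _; exact: sqn_ge0.
  by rewrite ler_nat ltnW.
have hB0 : 0 <= K%:R * B.
  by apply: mulr_ge0 => //; apply: sumr_ge0 => l _; exact: sqn_ge0.
have hN1 : 1 <= N%:R :> R by rewrite ler1n.
have step4 : (N%:R - 2) * (K%:R * B) + E <= N%:R * (eta ^+ 2 * Q%:R * F).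
  apply: le_trans (_ : N%:R * E <= _); last by apply: ler_wpM2l => //; lra.
  nra.
rewrite step1.
have -> : eta ^+ 2 * Lmax ^+ 2 * Q%:R * N%:R / K%:R * F
   = Lmax ^+ 2 / K%:R * (N%:R * (eta ^+ 2 * Q%:R * F)) by ring.
apply: ler_wpM2l => //.
by apply: divr_ge0; [exact: sqr_ge0 | exact: ler0n].
Qed.
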